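(* There exists a coefficient vector $\mathbf a=(a_0,a_1,a_2,\dots)\in\mathbb{R}^{\mathbb{N}}$ such that for every graph $G$, if $G$ is geometrically rigid then the linear centrality $f^{\mathbf a}$ has no ties on $G$.
   Context: A graph $G$ is a finite directed graph with node set $V_G=\{0,\dots,n-1\}$ and arc set $E_G\subseteq V_G\times V_G$; $d_G(x,y)$ is the shortest directed path length from $x$ to $y$ ($\infty$ if none). The distance-count matrix $C_G\in\mathbb{R}^{n\times n}$ has entries $(C_G)_{i,k}=|\{j\in V_G: d_G(j,i)=k\}|$ for $i,k\in\{0,\dots,n-1\}$. $G$ is geometrically rigid if the rows of $C_G$ are pairwise distinct. For $\mathbf a\in\mathbb{R}^{\mathbb{N}}$, the linear centrality $f^{\mathbf a}$ is defined by $f^{\mathbf a}_G(i)=\sum_{k=0}^{n-1}(C_G)_{i,k}\,a_k$. A centrality $f$ has no ties on $G$ if $f_G(x)\ne f_G(y)$ for all distinct $x,y\in V_G$. *)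

(* Defs.v *)
From mathcomp Require Import all_boot all_order all_algebra.
From mathcomp Require Import Rstruct.
From Stdlib Require Import Reals.
Set Implicit Arguments. Unset Strict Implicit. Unset Printing Implicit Defensive.
Import GRing.Theory Num.Theory.
Local Open Scope ring_scope.

(* A directed graph on V = {0..n-1}: arc relation E (self-loops allowed). *)

Fixpoint reach_exact (n : nat) (E : rel 'I_n) (k : nat) (x : 'I_n) : {set 'I_n} :=
  match k with
  | 0 => [set x]
  | k'.+1 => [set y | [exists z in reach_exact E k' x, E z y]]
  end.

(* d_G(x,y) = k : the shortest directed path from x to y has length k
   (shortest walk length = shortest path length). *)
Definition dist_eq (n : nat) (E : rel 'I_n) (x y : 'I_n) (k : nat) : bool :=
  (y \in reach_exact E k x) && [forall m : 'I_k, y \notin reach_exact E m x].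

(* (C_G)_{i,k} = |{ j : d_G(j,i) = k }| *)
Definition dcount (n : nat) (E : rel 'I_n) (i : 'I_n) (k : nat) : nat :=
  #|[set j : 'I_n | dist_eq E j i k]|.

Definition geometrically_rigid (n : nat) (E : rel 'I_n) : Prop :=
  forall i i' : 'I_n, i != i' ->
    exists k : 'I_n, dcount E i k <> dcount E i' k.

Definition lin_centrality (a : nat -> R) (n : nat) (E : rel 'I_n) (i : 'I_n) : R :=
  \sum_(k < n) (dcount E i k)%:R * a k.

Definition no_ties (n : nat) (f : 'I_n -> R) : Prop :=
  forall x y : 'I_n, x != y -> f x <> f y.

(* Main.v *)
Require Import Defs.
From mathcomp Require Import all_boot all_order all_algebra.
From mathcomp Require Import Rstruct.
From Stdlib Require Import Reals.
From mathcomp Require Import boolp classical_sets cardinality reals ereal interval_inference measure lebesgue_measure.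
Import Order.TTheory GRing.Theory Num.Theory.

Section Aux.
Local Open Scope classical_set_scope.
Local Open Scope ring_scope.

Lemma uncount (R : realType) (A : set R) : countable A -> exists x, ~ A x.
Proof.
move=> cA; apply/not_existsP => /= hA.
have sub : (`[0, 1]%classic : set R) `<=` A by move=> x _; apply/not_notP; exact: hA.
have c01 := sub_countable (subset_card_le sub) cA.
have := countable_lebesgue_measure0 c01.
rewrite lebesgue_measure_itv /= lte_fin ltr01 sube0.
by move/eqP; rewrite eqe oner_eq0.
Qed.

Definition bad (s : seq Rdefinitions.R) : set Rdefinitions.R :=
  range (fun p : seq int * int =>
    (\sum_(i < size s) (nth 0 p.1 i)%:~R * s`_i) / (p.2)%:~R).

Lemma bad_countable s : countable (bad s).
Proof. exact: (card_le_trans (card_image_le _ _) (countableP _)). Qed.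

Definition pickR (s : seq Rdefinitions.R) : Rdefinitions.R :=
  proj1_sig (cid (@uncount _ _ (bad_countable s))).

Lemma pickRP s : ~ bad s (pickR s).
Proof. exact: (proj2_sig (cid (@uncount _ _ (bad_countable s)))). Qed.

Fixpoint gseq (k : nat) : seq Rdefinitions.R :=
  match k with 0 => [::] | k'.+1 => rcons (gseq k') (pickR (gseq k')) end.

Definition aseq (k : nat) : Rdefinitions.R := pickR (gseq k).

Lemma size_gseq (k : nat) : size (gseq k) = k.
Proof. by elim: k => //= k IH; rewrite size_rcons IH. Qed.

Lemma nth_gseq (k i : nat) : (i < k)%nat -> (gseq k)`_i = aseq i.
Proof.
elim: k => // k IH; rewrite ltnS leq_eqVlt => /orP[/eqP->|lt] /=.
  by rewrite nth_rcons size_gseq ltnn eqxx.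
by rewrite nth_rcons size_gseq lt IH.
Qed.

Lemma indep n (d : 'I_n -> int) :
  \sum_(k < n) (d k)%:~R * aseq k = 0 -> forall k, d k = GRing.zero.
Proof.
elim: n d => [|n IH] d; first by move=> _ [].
rewrite big_ord_recr /=.
have [dz|dnz] := eqVneq (d ord_max) 0.
  rewrite dz mulr0z mul0r addr0 => /(IH (fun k => d (widen_ord (leqnSn n) k))) H k.
  have [kn|] := ltnP k n.
    by have := H (Ordinal kn); congr (d _ = 0); apply: val_inj.
  move=> nk; suff -> : k = ord_max by [].
  by apply: val_inj => /=; apply/eqP; rewrite eqn_leq nk -ltnS ltn_ord.
move=> hsum; exfalso; apply: (pickRP (gseq n)).
exists (mkseq (fun i => - d (inord i)) n, d ord_max) => //=.
rewrite size_gseq.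
have dR : (d ord_max)%:~R != 0 :> Rdefinitions.R by rewrite intr_eq0.
apply/(canLR (mulfK dR)).
have -> : \sum_(i < n) (nth 0 (mkseq (fun i => - d (inord i)) n) i)%:~R * (gseq n)`_i
   = - \sum_(i < n) (d (widen_ord (leqnSn n) i))%:~R * aseq i.
  rewrite -sumrN; apply: eq_bigr => i _.
  rewrite nth_mkseq // nth_gseq // mulrNz mulNr; congr (- (_%:~R * _)).
  by congr d; apply: val_inj; rewrite /= inordK // ltnS ltnW.
have ht : (d ord_max)%:~R * aseq n = - \sum_(i < n) (d (widen_ord (leqnSn n) i))%:~R * aseq i.
  by apply/eqP; rewrite -addr_eq0 addrC hsum.
by rewrite -ht mulrC.
Qed.
End Aux.

Theorem theorem3 :
  exists a : nat -> R,
    forall (n : nat) (E : rel 'I_n),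
      geometrically_rigid E -> no_ties (lin_centrality a E).
Proof.
exists aseq => n E rig x y xy fxy.
have [k hk] := rig x y xy.
have := @indep n (fun k => GRing.add (Posz (dcount E x k)) (GRing.opp (Posz (dcount E y k)))).
move=> /(_ _ k) h; apply: hk.
have : GRing.add (Posz (dcount E x k)) (GRing.opp (Posz (dcount E y k))) = GRing.zero.
  apply: h; move: fxy; rewrite /lin_centrality => fxy.
  under eq_bigr => i _ do rewrite intrB mulrBl.
  by rewrite sumrB; apply/eqP; rewrite subr_eq0; apply/eqP; exact: fxy.
by move/eqP; rewrite subr_eq0 => /eqP [].
Qed.
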